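(* If $X$ is a T$_D$ space in which every instance of the McKinsey scheme $\mathrm{M}:\ \Box\Diamond\varphi\to\Diamond\Box\varphi$ is $d$-valid, then $X$ is crowded and openly irresolvable.
   Context: $d$-semantics: a model on a space $X$ is a valuation of propositional variables by subsets of $X$; truth sets interpret Boolean connectives as set operations, $\Diamond\varphi$ as the derived set $\mathrm{d}_X$ (set of limit points: $x$ such that every $O-\{x\}$, $O$ an open neighbourhood of $x$, meets the set) of the truth set of $\varphi$, and $\Box=\neg\Diamond\neg$. A formula is $d$-valid in $X$ if true at every point in every model on $X$. $X$ is T$_D$ if $\mathrm{d}_X\{x\}$ is closed for all $x$; crowded if it has no isolated points. A space is irresolvable if it has no two disjoint non-empty dense subsets; $X$ is openly irresolvable if every non-empty open subspace is irresolvable. *)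

(* Defs.v *)
From mathcomp Require Import all_boot all_order.
From mathcomp Require Import boolp classical_sets topology.
Set Implicit Arguments. Unset Strict Implicit. Unset Printing Implicit Defensive.
Local Open Scope classical_set_scope.

Inductive form : Type :=
| Var : nat -> form
| Bot : form
| Neg : form -> form
| And : form -> form -> form
| Or  : form -> form -> form
| Imp : form -> form -> form
| Dia : form -> form.

Definition Box (f : form) : form := Neg (Dia (Neg f)).

Definition dset (T : topologicalType) (A : set T) : set T := limit_point A.

Fixpoint truth (T : topologicalType) (v : nat -> set T) (f : form) : set T :=
  match f with
  | Var n => v n
  | Bot => set0
  | Neg g => ~` truth v g
  | And g h => truth v g `&` truth v h
  | Or g h => truth v g `|` truth v h
  | Imp g h => ~` truth v g `|` truth v h
  | Dia g => dset (truth v g)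
  end.

Definition d_valid (T : topologicalType) (f : form) : Prop :=
  forall (v : nat -> set T) (x : T), truth v f x.

Definition McKinsey (f : form) : form := Imp (Box (Dia f)) (Dia (Box f)).

Definition TD_space (T : topologicalType) : Prop :=
  forall x : T, closed (dset [set x]).

Definition crowded (T : topologicalType) : Prop :=
  forall x : T, ~ open [set x].

Definition dense_in (T : topologicalType) (U A : set T) : Prop :=
  forall O : set T, open O -> O `&` U !=set0 -> O `&` A !=set0.

Definition irresolvable_in (T : topologicalType) (U : set T) : Prop :=
  ~ exists A B : set T,
      A `<=` U /\ B `<=` U /\ A `&` B = set0 /\ A !=set0 /\ B !=set0 /\
      dense_in U A /\ dense_in U B.

Definition openly_irresolvable (T : topologicalType) : Prop :=
  forall U : set T, open U -> U !=set0 -> irresolvable_in U.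

(* Main.v *)
Require Import Defs.
From mathcomp Require Import all_boot all_order.
From mathcomp Require Import boolp classical_sets topology.
Set Implicit Arguments. Unset Strict Implicit. Unset Printing Implicit Defensive.
Local Open Scope classical_set_scope.

Lemma key (T : topologicalType) (v : nat -> set T) (f : form) (x : T) (U : set T) :
  open U -> U x ->
  (forall y, U y -> y <> x -> dset (truth v f) y) ->
  (forall y, U y -> y <> x -> dset (~` truth v f) y) ->
  ~ truth v (McKinsey f) x.
Proof.
move=> oU Ux h1 h2 /=.
have nU : nbhs x U by apply: open_nbhs_nbhs; split.
case=> [H|H].
- have H' : dset (~` dset (truth v f)) x by apply: contrapT => K; apply: H.
  have [y [/eqP yx ny Uy]] := H' U nU.
  by apply: ny; apply: h1.
- have [y [/eqP yx ny Uy]] := H U nU.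
  by apply: ny; apply: h2.
Qed.

Lemma crowded_of (T : topologicalType) :
  (forall f : form, d_valid T (McKinsey f)) -> crowded T.
Proof.
move=> hM x ox.
apply: (@key T (fun _ => set0) (Var 0) x [set x] ox (erefl x)).
- by move=> y -> .
- by move=> y -> .
- exact: hM.
Qed.

Lemma dense_dset (T : topologicalType) (U A : set T) (y : T) :
  TD_space T -> crowded T -> open U -> dense_in U A -> U y -> dset A y.
Proof.
move=> TD cr oU dA Uy N.
rewrite nbhsE => -[B [oB By] BN].
have nd : ~ dset [set y] y.
  move=> H; have [z [/eqP zy zy' _]] := H setT filterT; exact: zy zy'.
set W := B `&` U `&` ~` dset [set y].
have oW : open W by apply: openI; [apply: openI|rewrite openC; apply: TD].
have Wy : W y by split; [split|].
set W' := W `\ y.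
have oW' : open W'.
  rewrite openE => z [Wz zy].
  have : ~ limit_point [set y] z by case: Wz.
  rewrite not_limit_pointE => -[X Xz XS].
  have nWz : nbhs z W by apply: open_nbhs_nbhs; split.
  rewrite /interior; apply: filterS (filterI nWz Xz) => w [Ww Xw]; split => //.
  move=> wy; rewrite /= in wy; subst w; apply: zy; symmetry; exact: XS.
have [z Wz] : W' !=set0.
  apply: contrapT => K; apply: (cr y).
  suff -> : [set y] = W by [].
  apply/seteqP; split.
    by move=> w /= ->.
  move=> w Ww /=; apply: contrapT => wy.
  by apply: K; exists w; split.
have [w [W'w Aw]] := dA W' oW' (ex_intro _ z (conj Wz (let: conj (conj (conj _ Uz) _) _ := Wz in Uz))).
case: W'w => [[[Bw _] _] wy].
exists w; split; [by apply/eqP | by [] | exact: BN].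
Qed.

Theorem theorem10 (T : topologicalType) :
  TD_space T -> (forall f : form, d_valid T (McKinsey f)) ->
  crowded T /\ openly_irresolvable T.
Proof.
move=> TD hM; have cr := crowded_of hM; split => //.
move=> U oU [u Uu] [A [B [AU [BU [AB [_ [_ [dA dB]]]]]]]].
apply: (@key T (fun _ => A) (Var 0) u U oU Uu).
- by move=> y Uy _; apply: (dense_dset TD cr oU dA Uy).
- move=> y Uy _ N Ny.
  have [z [zy Bz Nz]] := dense_dset TD cr oU dB Uy Ny.
  exists z; split => // Az.
  by have : (A `&` B) z by [] ; rewrite AB.
- exact: hM.
Qed.
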